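(* There is a constant $C$ such that for all $\varepsilon\in(0,1]$, all $\Gamma\in\mathbb{R}$ and all smooth $\alpha:\mathbb{T}\to\mathbb{T}$ with $\eta:=\|\alpha'\|_\infty\le1$, setting $\gamma^0(r)=(0,\alpha(r),r)$ and $$\mathbf{v}^0(\mathbf{x})=\Gamma\int_{\mathbb{T}}\mathbf{k}^\varepsilon(\mathbf{x}-\gamma^0(r))\times\partial_r\gamma^0(r)\,dr,$$ one has $$\sup_{r\in\mathbb{T}}\big|v_1^0(\gamma^0(r))\big|\le C|\Gamma|\eta\varepsilon^{-1},\qquad \sup_{\mathbf{x}\in\mathbb{T}^3}\big|\partial_3\mathbf{v}^0(\mathbf{x})\big|\le C|\Gamma|\eta\varepsilon^{-2}.$$
   Context: $\mathbb{T}^3=\mathbb{R}^3/\mathbb{Z}^3$, identified with $[-\tfrac12,\tfrac12)^3$. The regularized Biot–Savart kernel is $\mathbf{k}^\varepsilon(\mathbf{x})=\frac{1}{4\pi}\frac{\mathbf{x}}{(|\mathbf{x}|^2+\varepsilon^2)^{3/2}}+\mathbf{h}^\varepsilon(\mathbf{x})$, where $\mathbf{h}^\varepsilon$ is a smooth correction making $\mathbf{k}^\varepsilon$ periodic, with $\mathbf{h}^\varepsilon$ and $\nabla\mathbf{h}^\varepsilon$ bounded uniformly in $\varepsilon$, and each component $k_i^\varepsilon$ is odd in $x_i$ and even in the other two coordinates. $\times$ is the vector cross product in $\mathbb{R}^3$. *)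

(* Defs.v *)
From Stdlib Require Import Reals Lra.
From Coquelicot Require Import Coquelicot.
Open Scope R_scope.

Definition V3 : Type := (R * R * R)%type.
Definition mk3 (a b c : R) : V3 := (a, b, c).
Definition cx1 (x : V3) : R := fst (fst x).
Definition cx2 (x : V3) : R := snd (fst x).
Definition cx3 (x : V3) : R := snd x.
(* component i, for i = 0,1,2 (i.e. x_1, x_2, x_3) *)
Definition vcomp (i : nat) (x : V3) : R :=
  match i with 0%nat => cx1 x | 1%nat => cx2 x | _ => cx3 x end.

Definition vadd (x y : V3) : V3 := mk3 (cx1 x + cx1 y) (cx2 x + cx2 y) (cx3 x + cx3 y).
Definition vsub (x y : V3) : V3 := mk3 (cx1 x - cx1 y) (cx2 x - cx2 y) (cx3 x - cx3 y).
Definition vscale (a : R) (x : V3) : V3 := mk3 (a * cx1 x) (a * cx2 x) (a * cx3 x).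
Definition cross (x y : V3) : V3 :=
  mk3 (cx2 x * cx3 y - cx3 x * cx2 y)
      (cx3 x * cx1 y - cx1 x * cx3 y)
      (cx1 x * cx2 y - cx2 x * cx1 y).
Definition norm3 (x : V3) : R := sqrt (cx1 x ^ 2 + cx2 x ^ 2 + cx3 x ^ 2).
Definition ebasis (i : nat) : V3 :=
  match i with 0%nat => mk3 1 0 0 | 1%nat => mk3 0 1 0 | _ => mk3 0 0 1 end.

(** Partial derivative d/dx_{i+1} of a scalar function on R^3. *)
Definition pd (i : nat) (f : V3 -> R) (x : V3) : R :=
  Derive (fun t => f (vadd x (vscale t (ebasis i)))) 0.
Definition pd_field (i : nat) (F : V3 -> V3) (x : V3) : V3 :=
  mk3 (pd i (fun y => cx1 (F y)) x) (pd i (fun y => cx2 (F y)) x)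
      (pd i (fun y => cx3 (F y)) x).

Fixpoint Ck (n : nat) (f : V3 -> R) : Prop :=
  match n with
  | 0%nat => forall x, continuous f x
  | S m => (forall x, continuous f x) /\
           forall i, (i < 3)%nat ->
             (forall x, ex_derive (fun t => f (vadd x (vscale t (ebasis i)))) 0)
             /\ Ck m (pd i f)
  end.
Definition smooth3 (f : V3 -> R) : Prop := forall n, Ck n f.
Definition smooth_field (F : V3 -> V3) : Prop :=
  forall i, (i < 3)%nat -> smooth3 (fun x => vcomp i (F x)).

Definition smooth1 (f : R -> R) : Prop := forall n x, ex_derive_n f n x.

Definition sup_abs (f : R -> R) : Rbar :=
  Lub_Rbar (fun y => exists r, y = Rabs (f r)).

(** Torus T^3 = R^3/Z^3 identified with [-1/2,1/2)^3. *)
Definition red (r : R) : R := r - IZR (Int_part (r + /2)).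
Definition red3 (x : V3) : V3 := mk3 (red (cx1 x)) (red (cx2 x)) (red (cx3 x)).
Definition in_cell (x : V3) : Prop :=
  -/2 <= cx1 x < /2 /\ -/2 <= cx2 x < /2 /\ -/2 <= cx3 x < /2.

(** Principal part of the regularized Biot-Savart kernel. *)
Definition K0 (eps : R) (x : V3) : V3 :=
  vscale (/ (4 * PI) * / (sqrt (norm3 x ^ 2 + eps ^ 2)) ^ 3) x.

(** k^eps on T^3 (as a Z^3-periodic function on R^3): on the fundamental
    cell [-1/2,1/2)^3 it equals K0 eps + h eps. *)
Definition kernel (h : R -> V3 -> V3) (eps : R) (x : V3) : V3 :=
  vadd (K0 eps (red3 x)) (h eps (red3 x)).

Definition refl (i : nat) (x : V3) : V3 :=
  match i with
  | 0%nat => mk3 (- cx1 x) (cx2 x) (cx3 x)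
  | 1%nat => mk3 (cx1 x) (- cx2 x) (cx3 x)
  | _ => mk3 (cx1 x) (cx2 x) (- cx3 x)
  end.
Definition kernel_sym (k : V3 -> V3) : Prop :=
  forall i j x, (i < 3)%nat -> (j < 3)%nat ->
    vcomp i (k (refl j x)) = (if Nat.eqb i j then - vcomp i (k x) else vcomp i (k x)).

Definition RInt3 (F : R -> V3) (a b : R) : V3 :=
  mk3 (RInt (fun r => cx1 (F r)) a b) (RInt (fun r => cx2 (F r)) a b)
      (RInt (fun r => cx3 (F r)) a b).

Definition gam0 (alpha : R -> R) (r : R) : V3 := mk3 0 (alpha r) r.
Definition dgam0 (alpha : R -> R) (r : R) : V3 := mk3 0 (Derive alpha r) 1.

Definition v0 (h : R -> V3 -> V3) (eps Gam : R) (alpha : R -> R) (x : V3) : V3 :=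
  vscale Gam (RInt3 (fun r => cross (kernel h eps (vsub x (gam0 alpha r)))
                                      (dgam0 alpha r)) 0 1).

(* Main.v *)
Require Import Defs.
From Stdlib Require Import Reals Lra Lia.
From Coquelicot Require Import Coquelicot.
Open Scope R_scope.

Lemma red_bounds r : -/2 <= red r < /2.
Proof.
  unfold red. destruct (base_Int_part (r + /2)) as [H1 H2]. lra.
Qed.

Lemma red_char r n : IZR n - /2 <= r < IZR n + /2 -> red r = r - IZR n.
Proof.
  intros H. unfold red. f_equal. f_equal. symmetry. apply Int_part_spec. lra.
Qed.

Lemma red_IZR r n : red (r + IZR n) = red r.
Proof.
  unfold red at 2. set (m := Int_part (r + /2)).
  destruct (base_Int_part (r + /2)) as [H1 H2]. fold m in H1, H2.
  rewrite (red_char _ (m + n)); rewrite plus_IZR; [ring|lra].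
Qed.

Lemma red_shift r t : -/2 <= red r + t < /2 -> red (r + t) = red r + t.
Proof.
  intros H. assert (E : red r = r - IZR (Int_part (r + /2))) by reflexivity.
  rewrite E in *. rewrite (red_char _ (Int_part (r + /2))); [ring|lra].
Qed.

Lemma red_id r : -/2 <= r < /2 -> red r = r.
Proof. intros H. rewrite (red_char r 0); [ring|simpl; lra]. Qed.

Lemma red_m1 r : red (r - 1) = red r.
Proof. replace (r - 1) with (r + IZR (-1)) by (simpl; ring). apply red_IZR. Qed.

Lemma red_p1 r : red (r + 1) = red r.
Proof. replace (r + 1) with (r + IZR 1) by (simpl; ring). apply red_IZR. Qed.

Lemma red_mZ r d : red (r - IZR d) = red r.
Proof. replace (r - IZR d) with (r + IZR (-d)) by (rewrite opp_IZR; ring). apply red_IZR. Qed.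
Ltac veq := unfold vadd, vsub, vscale, ebasis, gam0, refl, red3, mk3, cx1, cx2, cx3; simpl;
  repeat (apply pair_equal_spec; split); try ring.

Lemma kernel_red h e y y' :
  red (cx1 y) = red (cx1 y') -> red (cx2 y) = red (cx2 y') -> red (cx3 y) = red (cx3 y') ->
  kernel h e y = kernel h e y'.
Proof. intros H1 H2 H3. unfold kernel, red3. rewrite H1, H2, H3. reflexivity. Qed.

Lemma vcomp_vadd i a b : vcomp i (vadd a b) = vcomp i a + vcomp i b.
Proof. destruct i as [|[|i]]; reflexivity. Qed.

Lemma line_shift p j t s :
  vadd p (vscale t (ebasis j)) = vadd (vadd p (vscale s (ebasis j))) (vscale (t - s) (ebasis j)).
Proof. destruct j as [|[|j]]; veq. Qed.

Lemma pd_line (f : V3 -> R) j :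
  (forall y, ex_derive (fun t => f (vadd y (vscale t (ebasis j)))) 0) ->
  forall p s, is_derive (fun t => f (vadd p (vscale t (ebasis j)))) s
                (pd j f (vadd p (vscale s (ebasis j)))).
Proof.
  intros Hd p s.
  set (q := vadd p (vscale s (ebasis j))).
  apply is_derive_ext with (f := fun t => (fun u => f (vadd q (vscale u (ebasis j)))) (t - s)).
  { intros t. simpl. unfold q. rewrite <- line_shift. reflexivity. }
  replace (pd j f q) with (scal 1 (pd j f q)) by (exact (scal_one (pd j f q))).
  apply (is_derive_comp (fun u => f (vadd q (vscale u (ebasis j)))) (fun t => t - s)).
  - replace (s - s) with 0 by ring. apply Derive_correct. apply Hd.
  - auto_derive; auto; ring.
Qed.

Lemma derive_right_eq (f g : R -> R) l1 l2 d : 0 < d -> is_derive f 0 l1 -> is_derive g 0 l2 ->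
  (forall t, 0 <= t < d -> f t = g t) -> l1 = l2.
Proof.
  intros Hd H1 H2 Heq. apply is_derive_Reals in H1. apply is_derive_Reals in H2.
  destruct (Req_dec l1 l2) as [E|NE]; [exact E|exfalso].
  set (e := Rabs (l1 - l2) / 2).
  assert (He : 0 < e) by (unfold e; assert (0 < Rabs (l1 - l2)) by (apply Rabs_pos_lt; intro; apply NE; lra); lra).
  destruct (H1 e He) as [d1 Hd1]. destruct (H2 e He) as [d2 Hd2].
  set (t := Rmin d (Rmin d1 d2) / 2).
  assert (Ht : 0 < t /\ t < d /\ t < d1 /\ t < d2).
  { unfold t. destruct d1 as [d1 p1]; destruct d2 as [d2 p2]; simpl.
    assert (A := Rmin_l d (Rmin d1 d2)). assert (B := Rmin_r d (Rmin d1 d2)).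
    assert (B1 := Rmin_l d1 d2). assert (B2 := Rmin_r d1 d2).
    assert (P := Rmin_pos d (Rmin d1 d2) Hd (Rmin_pos d1 d2 p1 p2)). lra. }
  destruct Ht as [Ht0 [Htd [Ht1 Ht2]]].
  assert (A1 := Hd1 t ltac:(lra) ltac:(rewrite Rabs_right; lra)).
  assert (A2 := Hd2 t ltac:(lra) ltac:(rewrite Rabs_right; lra)).
  rewrite Rplus_0_l in A1, A2. rewrite (Heq t ltac:(lra)), (Heq 0 ltac:(lra)) in A1.
  set (Q := (g t - g 0) / t) in *.
  assert (Rabs (l1 - l2) <= Rabs (Q - l2) + Rabs (Q - l1)).
  { replace (l1 - l2) with ((Q - l2) - (Q - l1)) by ring.
    eapply Rle_trans; [apply Rabs_triang|]. rewrite Rabs_Ropp. lra. }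
  unfold e in *. lra.
Qed.

Definition cc := / (4 * PI).

Lemma cc_pos : 0 < cc.
Proof. unfold cc. apply Rinv_0_lt_compat. assert (H := PI_RGT_0). lra. Qed.

Lemma gen_der a b q zj : 0 < q ->
  is_derive (fun t => cc * / sqrt (q + 2 * t * zj + t ^ 2) ^ 3 * (a + t * b)) 0
    (cc * (b / sqrt q ^ 3 - 3 * a * zj / sqrt q ^ 5)).
Proof.
  intros Hq. assert (Hs : 0 < sqrt q) by (apply sqrt_lt_R0; lra).
  auto_derive; replace (q + 2 * 0 * zj + 0 * (0 * 1)) with q by ring.
  - repeat split; try lra. apply Rgt_not_eq. apply Rmult_lt_0_compat; [lra|].
    apply Rmult_lt_0_compat; lra.
  - field. lra.
Qed.

Lemma sq3_nonneg a b c : 0 <= a ^ 2 + b ^ 2 + c ^ 2.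
Proof. nra. Qed.

Lemma norm3_sq w : norm3 w ^ 2 = cx1 w ^ 2 + cx2 w ^ 2 + cx3 w ^ 2.
Proof. unfold norm3. rewrite pow2_sqrt; [reflexivity| apply sq3_nonneg]. Qed.

Lemma vcomp_vscale i k w : vcomp i (vscale k w) = k * vcomp i w.
Proof. destruct i as [|[|i]]; reflexivity. Qed.

Lemma K0_line i j z eps t : (i < 3)%nat -> (j < 3)%nat ->
  vcomp i (K0 eps (vadd z (vscale t (ebasis j)))) =
  cc * / sqrt ((norm3 z ^ 2 + eps ^ 2) + 2 * t * vcomp j z + t ^ 2) ^ 3 *
    (vcomp i z + t * (if Nat.eqb i j then 1 else 0)).
Proof.
  intros Hi Hj. unfold K0. rewrite vcomp_vscale. rewrite !norm3_sq. unfold cc.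
  destruct i as [|[|[|i]]]; [| | |lia]; destruct j as [|[|[|j]]]; try lia;
  unfold vadd, vscale, ebasis, vcomp, mk3, cx1, cx2, cx3; cbn [fst snd Nat.eqb];
  match goal with |- _ * / sqrt ?X ^ 3 * ?Y = _ * / sqrt ?X' ^ 3 * ?Y' =>
    replace X with X' by ring; replace Y with Y' by ring; reflexivity end.
Qed.

Lemma K0_der_bound a b zj S : 0 < S -> Rabs b <= 1 -> a ^ 2 <= S ^ 2 -> zj ^ 2 <= S ^ 2 ->
  Rabs (b / S ^ 3 - 3 * a * zj / S ^ 5) <= 4 / S ^ 3.
Proof.
  intros HS Hb Ha Hz.
  assert (Hb' : -1 <= b <= 1) by (pose proof (Rle_abs b); pose proof (Rle_abs (- b)); rewrite Rabs_Ropp in *; lra).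
  assert (Haz : - S ^ 2 <= a * zj <= S ^ 2) by (split; nra).
  replace (b / S ^ 3 - 3 * a * zj / S ^ 5) with ((b * S ^ 2 - 3 * (a * zj)) / S ^ 5)
    by (field; lra).
  assert (H5 : 0 < S ^ 5) by (apply pow_lt; lra).
  rewrite Rabs_div by lra. rewrite (Rabs_right (S ^ 5)) by lra.
  assert (HN : Rabs (b * S ^ 2 - 3 * (a * zj)) <= 4 * S ^ 2).
  { apply Rabs_le. assert (0 <= S ^ 2) by (apply pow_le; lra). split; nra. }
  replace (4 / S ^ 3) with (4 * S ^ 2 / S ^ 5) by (field; lra).
  unfold Rdiv. apply Rmult_le_compat_r; [left; apply Rinv_0_lt_compat; lra| exact HN].
Qed.

Lemma le_inv3 a b : 0 < a -> a <= b -> / b ^ 3 <= / a ^ 3.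
Proof.
  intros Ha Hab. apply Rinv_le_contravar; [apply pow_lt; lra| apply pow_incr; lra].
Qed.

Lemma vcomp_sq_le i z : (i < 3)%nat -> vcomp i z ^ 2 <= norm3 z ^ 2.
Proof.
  intros Hi. rewrite norm3_sq. destruct i as [|[|[|i]]]; [| | |lia]; simpl vcomp;
  assert (0 <= cx1 z ^ 2) by apply pow2_ge_0; assert (0 <= cx2 z ^ 2) by apply pow2_ge_0;
  assert (0 <= cx3 z ^ 2) by apply pow2_ge_0; lra.
Qed.

Lemma red3_line y j t : (j < 3)%nat -> 0 <= t -> red (vcomp j y) + t < /2 ->
  red3 (vadd y (vscale t (ebasis j))) = vadd (red3 y) (vscale t (ebasis j)).
Proof.
  intros Hj Ht Hr.
  destruct j as [|[|[|j]]]; [| | |lia]; unfold vadd, vscale, ebasis, red3, mk3, vcomp, cx1, cx2, cx3 in *;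
  cbn [fst snd] in *; rewrite ?Rmult_0_r, ?Rplus_0_r, ?Rmult_1_r;
  rewrite red_shift; try reflexivity; pose proof (red_bounds (fst (fst y)));
  pose proof (red_bounds (snd (fst y))); pose proof (red_bounds (snd y)); lra.
Qed.

Lemma sm_ex F i j : smooth_field F -> (i < 3)%nat -> (j < 3)%nat ->
  forall y, ex_derive (fun t => vcomp i (F (vadd y (vscale t (ebasis j))))) 0.
Proof. intros HF Hi Hj. destruct (HF i Hi 1%nat) as [_ H]. apply (H j Hj). Qed.

Lemma sm_cont F i : smooth_field F -> (i < 3)%nat -> forall y, continuous (fun x => vcomp i (F x)) y.
Proof. intros HF Hi. exact (HF i Hi 0%nat). Qed.

Lemma sm_pdcont F i j : smooth_field F -> (i < 3)%nat -> (j < 3)%nat ->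
  forall y, continuous (pd j (fun x => vcomp i (F x))) y.
Proof. intros HF Hi Hj. destruct (HF i Hi 1%nat) as [_ H]. apply (H j Hj). Qed.

Lemma in_cell_red3 y : in_cell (red3 y).
Proof.
  unfold in_cell, red3, mk3, cx1, cx2, cx3; cbn [fst snd].
  repeat split; apply red_bounds.
Qed.

Definition hyp_M (h : R -> V3 -> V3) eps M := forall x i j, in_cell x -> (i < 3)%nat -> (j < 3)%nat ->
        norm3 (h eps x) <= M /\ Rabs (pd j (fun y => vcomp i (h eps y)) x) <= M.

Lemma pd_kernel_bound h eps M i j y : 0 < eps -> smooth_field (h eps) -> smooth_field (kernel h eps) ->
  hyp_M h eps M -> (i < 3)%nat -> (j < 3)%nat ->
  Rabs (pd j (fun x => vcomp i (kernel h eps x)) y) <= 4 * cc / sqrt (red (cx3 y) ^ 2 + eps ^ 2) ^ 3 + M.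
Proof.
  intros He HhS HkS HM Hi Hj.
  set (z := red3 y).
  set (q := norm3 z ^ 2 + eps ^ 2).
  assert (Hq : 0 < q) by (unfold q; assert (0 <= norm3 z ^ 2) by apply pow2_ge_0; nra).
  set (L2 := cc * ((if Nat.eqb i j then 1 else 0) / sqrt q ^ 3 - 3 * vcomp i z * vcomp j z / sqrt q ^ 5)
             + pd j (fun x => vcomp i (h eps x)) z).
  assert (D1 := Derive_correct _ _ (sm_ex _ i j HkS Hi Hj y)).
  assert (D2 : is_derive (fun t => vcomp i (K0 eps (vadd z (vscale t (ebasis j))))
                   + vcomp i (h eps (vadd z (vscale t (ebasis j))))) 0 L2).
  { apply (is_derive_plus (fun t => vcomp i (K0 eps (vadd z (vscale t (ebasis j)))))
                          (fun t => vcomp i (h eps (vadd z (vscale t (ebasis j)))))).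
    - eapply is_derive_ext. intros t. symmetry. apply K0_line; assumption.
      apply gen_der. exact Hq.
    - apply Derive_correct. apply (sm_ex _ i j HhS Hi Hj). }
  assert (EQ : pd j (fun x => vcomp i (kernel h eps x)) y = L2).
  { pose proof (red_bounds (vcomp j y)).
    eapply (derive_right_eq _ _ _ _ (/2 - red (vcomp j y))); [lra| exact D1| exact D2|].
    intros t Ht. cbn beta. unfold kernel. rewrite red3_line by (auto; lra).
    rewrite vcomp_vadd. reflexivity. }
  rewrite EQ. unfold L2.
  assert (Hs : 0 < sqrt q) by (apply sqrt_lt_R0; lra).
  assert (Hsq : sqrt q ^ 2 = q) by (apply pow2_sqrt; lra).
  assert (B1 : Rabs (cc * ((if Nat.eqb i j then 1 else 0) / sqrt q ^ 3 - 3 * vcomp i z * vcomp j z / sqrt q ^ 5))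
              <= cc * (4 / sqrt q ^ 3)).
  { rewrite Rabs_mult, (Rabs_right cc) by (left; apply cc_pos).
    apply Rmult_le_compat_l; [left; apply cc_pos|].
    apply K0_der_bound; auto.
    - destruct (Nat.eqb i j); rewrite ?Rabs_R1, ?Rabs_R0; lra.
    - rewrite Hsq. unfold q. pose proof (vcomp_sq_le i z Hi). nra.
    - rewrite Hsq. unfold q. pose proof (vcomp_sq_le j z Hj). nra. }
  assert (B2 : Rabs (pd j (fun x => vcomp i (h eps x)) z) <= M) by (apply (HM z i j); auto; apply in_cell_red3).
  assert (B3 : / sqrt q ^ 3 <= / sqrt (red (cx3 y) ^ 2 + eps ^ 2) ^ 3).
  { apply le_inv3. apply sqrt_lt_R0. assert (0 <= red (cx3 y) ^ 2) by apply pow2_ge_0. nra.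
    apply sqrt_le_1_alt. unfold q. pose proof (vcomp_sq_le 2 z ltac:(lia)).
    replace (vcomp 2 z) with (red (cx3 y)) in H by reflexivity. lra. }
  eapply Rle_trans; [apply Rabs_triang|].
  assert (cc * (4 / sqrt q ^ 3) <= 4 * cc / sqrt (red (cx3 y) ^ 2 + eps ^ 2) ^ 3).
  { unfold Rdiv. pose proof cc_pos. nra. }
  lra.
Qed.

Lemma abs_le_of_sq a S : 0 <= S -> a ^ 2 <= S ^ 2 -> Rabs a <= S.
Proof. intros HS H. apply Rabs_le. split; nra. Qed.

Lemma vcomp_le_norm i w : (i < 3)%nat -> Rabs (vcomp i w) <= norm3 w.
Proof. intros Hi. apply abs_le_of_sq. apply sqrt_pos. apply vcomp_sq_le; auto. Qed.

Lemma kernel_val_bound h eps M i y : 0 < eps -> hyp_M h eps M -> (i < 3)%nat ->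
  Rabs (vcomp i (kernel h eps y)) <= cc / (red (cx3 y) ^ 2 + eps ^ 2) + M.
Proof.
  intros He HM Hi. unfold kernel. rewrite vcomp_vadd. set (z := red3 y).
  eapply Rle_trans; [apply Rabs_triang|].
  assert (B2 : Rabs (vcomp i (h eps z)) <= M).
  { eapply Rle_trans; [apply vcomp_le_norm; auto|]. apply (HM z i 0%nat); auto. apply in_cell_red3. }
  set (q := norm3 z ^ 2 + eps ^ 2).
  assert (Hq : 0 < q) by (unfold q; assert (0 <= norm3 z ^ 2) by apply pow2_ge_0; nra).
  assert (Hs : 0 < sqrt q) by (apply sqrt_lt_R0; lra).
  assert (Hsq : sqrt q ^ 2 = q) by (apply pow2_sqrt; lra).
  assert (B1 : Rabs (vcomp i (K0 eps z)) <= cc / q).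
  { unfold K0. rewrite vcomp_vscale. fold q. rewrite Rabs_mult.
    replace (/ (4 * PI)) with cc by reflexivity.
    rewrite Rabs_right.
    2: { left. apply Rmult_lt_0_compat; [apply cc_pos| apply Rinv_0_lt_compat, pow_lt; lra]. }
    assert (Ha : Rabs (vcomp i z) <= sqrt q).
    { apply abs_le_of_sq; [lra|]. rewrite Hsq. unfold q. pose proof (vcomp_sq_le i z Hi). nra. }
    assert (E : cc * / sqrt q ^ 3 * sqrt q = cc / sqrt q ^ 2) by (field; lra).
    rewrite Hsq in E. rewrite <- E.
    apply Rmult_le_compat_l; [|exact Ha].
    left. apply Rmult_lt_0_compat; [apply cc_pos| apply Rinv_0_lt_compat, pow_lt; lra]. }
  assert (B3 : cc / q <= cc / (red (cx3 y) ^ 2 + eps ^ 2)).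
  { unfold Rdiv. apply Rmult_le_compat_l; [left; apply cc_pos|].
    apply Rinv_le_contravar. assert (0 <= red (cx3 y) ^ 2) by apply pow2_ge_0. nra.
    unfold q. pose proof (vcomp_sq_le 2 z ltac:(lia)).
    replace (vcomp 2 z) with (red (cx3 y)) in H by reflexivity. lra. }
  lra.
Qed.

Lemma RInt_periodic (g : R -> R) a : (forall x, continuous g x) -> (forall x, g (x + 1) = g x) ->
  RInt g a (a + 1) = RInt g 0 1.
Proof.
  intros Hc Hp.
  assert (Ex : forall u v, ex_RInt g u v) by (intros; apply (@ex_RInt_continuous R_CompleteNormedModule); auto).
  rewrite <- (RInt_Chasles g a 1 (a + 1)) by auto.
  rewrite <- (RInt_Chasles g a 0 1) by auto.
  assert (E : RInt g 1 (a + 1) = RInt g 0 a).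
  { assert (L := RInt_comp_lin g 1 1 0 a).
    replace (1 * 0 + 1) with 1 in L by ring. replace (1 * a + 1) with (a + 1) in L by ring.
    rewrite <- L by auto. apply RInt_ext. intros x _.
    replace (1 * x + 1) with (x + 1) by ring. rewrite Hp.
    exact (scal_one (g x)). }
  rewrite E. rewrite <- (opp_RInt_swap g 0 a) by auto.
  unfold plus, opp; simpl. ring.
Qed.

Lemma atan_antider A B x3 eps t : 0 < eps ->
  is_derive (fun s => - (A / eps) * atan ((x3 - s) / eps) + B * s) t
    (A / ((x3 - t) ^ 2 + eps ^ 2) + B).
Proof.
  intros He.
  assert (D : is_derive (fun s => atan ((x3 - s) / eps)) t (/ (1 + ((x3 - t) / eps)²) * (- / eps))).
  { replace (/ (1 + ((x3 - t) / eps)²) * (- / eps)) with (scal (- / eps) (/ (1 + ((x3 - t) / eps)²)))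
      by (unfold scal; simpl; unfold mult; simpl; ring).
    apply (is_derive_comp atan (fun s => (x3 - s) / eps)).
    apply is_derive_atan. auto_derive; auto. field. lra. }
  assert (H : is_derive (fun s => - (A / eps) * atan ((x3 - s) / eps) + B * s) t
     (plus (- (A / eps) * (/ (1 + ((x3 - t) / eps)²) * - / eps)) (B * 1))).
  { apply (is_derive_plus (fun s => - (A / eps) * atan ((x3 - s) / eps)) (fun s => B * s)).
    apply is_derive_scal. exact D. apply is_derive_scal. auto_derive; auto. }
  replace (A / ((x3 - t) ^ 2 + eps ^ 2) + B)
    with (plus (- (A / eps) * (/ (1 + ((x3 - t) / eps)²) * - / eps)) (B * 1)); [exact H|].
  unfold plus; simpl. unfold Rsqr.
  assert (0 < (x3 - t) ^ 2 + eps ^ 2) by (assert (0 <= (x3 - t) ^ 2) by apply pow2_ge_0; assert (0 < eps ^ 2) by (apply pow_lt; lra); lra).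
  assert (0 < 1 + (x3 - t) / eps * ((x3 - t) / eps)) by
    (assert (0 <= (x3 - t) / eps * ((x3 - t) / eps)) by apply Rle_0_sqr; lra).
  field. repeat split; lra.
Qed.

Lemma bound_cont A B x3 eps t : 0 < eps -> continuous (fun s => A / ((x3 - s) ^ 2 + eps ^ 2) + B) t.
Proof.
  intros He. apply (@ex_derive_continuous R_AbsRing R_NormedModule). auto_derive.
  assert (0 <= (x3 - t) * (x3 - t)) by apply Rle_0_sqr. nra.
Qed.

Lemma int_bound (g : R -> R) x3 eps A B : 0 < eps -> 0 <= A ->
  (forall x, continuous g x) -> (forall x, g (x + 1) = g x) ->
  (forall t, x3 - /2 < t < x3 + /2 -> Rabs (g t) <= A / ((x3 - t) ^ 2 + eps ^ 2) + B) ->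
  Rabs (RInt g 0 1) <= A * PI / eps + B.
Proof.
  intros He HA Hc Hp Hb.
  rewrite <- (RInt_periodic g (x3 - /2)) by auto.
  replace (x3 - /2 + 1) with (x3 + /2) by field.
  set (F := fun s => - (A / eps) * atan ((x3 - s) / eps) + B * s).
  set (bd := fun s => A / ((x3 - s) ^ 2 + eps ^ 2) + B).
  assert (Hi : is_RInt bd (x3 - /2) (x3 + /2) (minus (F (x3 + /2)) (F (x3 - /2)))).
  { apply (@is_RInt_derive R_CompleteNormedModule). intros; apply atan_antider; auto. intros; apply bound_cont; auto. }
  assert (Exg : ex_RInt g (x3 - /2) (x3 + /2)) by (apply (@ex_RInt_continuous R_CompleteNormedModule); auto).
  eapply Rle_trans. apply abs_RInt_le; [lra| exact Exg].
  eapply Rle_trans. apply (RInt_le _ bd); [lra| |eexists; exact Hi|].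
  { apply (@ex_RInt_continuous R_CompleteNormedModule). intros. apply continuous_Rabs_comp. auto. }
  { intros t Ht. apply Hb. lra. }
  rewrite (is_RInt_unique _ _ _ _ Hi). unfold F, minus, plus, opp; simpl.
  replace ((x3 - (x3 + /2)) / eps) with (- (/2 / eps)) by (field; lra).
  replace ((x3 - (x3 - /2)) / eps) with (/2 / eps) by (field; lra).
  rewrite atan_opp.
  pose proof (atan_bound (/2 / eps)). 
  assert (0 <= A / eps) by (apply Rdiv_le_0_compat; lra).
  assert (A / eps * (2 * atan (/ 2 / eps)) <= A / eps * PI) by (apply Rmult_le_compat_l; lra).
  replace (A * PI / eps) with (A / eps * PI) by (field; lra).
  nra.
Qed.

Lemma eta_facts (alpha : R -> R) : Rbar_le (sup_abs (Derive alpha)) 1 ->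
  0 <= real (sup_abs (Derive alpha)) <= 1 /\
  forall r, Rabs (Derive alpha r) <= real (sup_abs (Derive alpha)).
Proof.
  intros Hle. unfold sup_abs in *.
  destruct (Lub_Rbar_correct (fun y => exists r, y = Rabs (Derive alpha r))) as [Hub _].
  destruct (Lub_Rbar (fun y => exists r, y = Rabs (Derive alpha r))) as [e| |] eqn:E;
    simpl in Hle |- *.
  - assert (Hr : forall r, Rabs (Derive alpha r) <= e).
    { intros r. specialize (Hub (Rabs (Derive alpha r)) (ex_intro _ r eq_refl)). exact Hub. }
    split; [|exact Hr]. split; [|exact Hle].
    eapply Rle_trans; [apply Rabs_pos| apply (Hr 0)].
  - contradiction.
  - exfalso. exact (Hub _ (ex_intro _ 0 eq_refl)).
Qed.

Lemma alpha_der (alpha : R -> R) x : smooth1 alpha -> is_derive alpha x (Derive alpha x).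
Proof. intros Hs. apply Derive_correct. exact (Hs 1%nat x). Qed.

Lemma alpha_cont (alpha : R -> R) x : smooth1 alpha -> continuous alpha x.
Proof. intros Hs. apply (@ex_derive_continuous R_AbsRing R_NormedModule). exact (Hs 1%nat x). Qed.

Lemma dalpha_cont (alpha : R -> R) x : smooth1 alpha -> continuous (Derive alpha) x.
Proof. intros Hs. apply (@ex_derive_continuous R_AbsRing R_NormedModule). exact (Hs 2%nat x). Qed.

Lemma dalpha_per (alpha : R -> R) d r : smooth1 alpha -> (forall r, alpha (r + 1) = alpha r + IZR d) ->
  Derive alpha (r + 1) = Derive alpha r.
Proof.
  intros Hs Hp.
  assert (H1 : is_derive (fun s => alpha (s + 1)) r (Derive alpha (r + 1))).
  { replace (Derive alpha (r + 1)) with (scal 1 (Derive alpha (r + 1))) by (exact (scal_one _)).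
    apply (is_derive_comp alpha (fun s => s + 1)). apply alpha_der; auto.
    auto_derive; auto; ring. }
  assert (H2 : is_derive (fun s => alpha (s + 1)) r (Derive alpha r)).
  { eapply is_derive_ext. intros s. symmetry. apply Hp.
    replace (Derive alpha r) with (plus (Derive alpha r) 0) by (unfold plus; simpl; ring).
    apply (is_derive_plus alpha (fun _ => IZR d)). apply alpha_der; auto. apply (@is_derive_const R_AbsRing R_NormedModule). }
  apply is_derive_unique in H1. apply is_derive_unique in H2. congruence.
Qed.

Lemma alpha_lip (alpha : R -> R) eta s r : smooth1 alpha -> (forall x, Rabs (Derive alpha x) <= eta) ->
  Rabs (alpha s - alpha r) <= eta * Rabs (s - r).
Proof.
  intros Hs Hb.
  destruct (MVT_gen alpha r s (Derive alpha)) as [c [_ Hc]].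
  - intros; apply alpha_der; auto.
  - intros. apply continuity_pt_filterlim. apply alpha_cont; auto.
  - rewrite Hc, Rabs_mult. apply Rmult_le_compat_r; [apply Rabs_pos| apply Hb].
Qed.

Lemma cont_pair {U V W : UniformSpace} (a : U -> V) (b : U -> W) z0 :
  continuous a z0 -> continuous b z0 -> continuous (fun z => (a z, b z)) z0.
Proof.
  intros Ha Hb. apply (continuous_comp_2 a b (fun x y => (x,y))); auto.
  intros P [eps HP]. exists eps. intros [y1 y2] Hy. apply HP. exact Hy.
Qed.

Lemma cont_mk3 {U : UniformSpace} (F : V3 -> R) (a b c : U -> R) z0 :
  (forall y, continuous F y) -> continuous a z0 -> continuous b z0 -> continuous c z0 ->
  continuous (fun z => F (mk3 (a z) (b z) (c z))) z0.
Proof.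
  intros HF Ha Hb Hc.
  apply (continuous_comp (fun z => mk3 (a z) (b z) (c z)) F). 2: apply HF.
  unfold mk3. apply cont_pair; auto. apply cont_pair; auto.
Qed.

Lemma cont_mult {U : UniformSpace} (f g : U -> R) x :
  continuous f x -> continuous g x -> continuous (fun y => f y * g y) x.
Proof. intros. apply (continuous_mult f g); auto. Qed.

Lemma cont_plus {U : UniformSpace} (f g : U -> R) x :
  continuous f x -> continuous g x -> continuous (fun y => f y + g y) x.
Proof. intros. apply (@continuous_plus U R_AbsRing R_NormedModule f g); auto. Qed.

Lemma cont_opp {U : UniformSpace} (f : U -> R) x :
  continuous f x -> continuous (fun y => - f y) x.
Proof. intros. apply (@continuous_opp U R_AbsRing R_NormedModule f); auto. Qed.

Lemma cont_minus {U : UniformSpace} (f g : U -> R) x :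
  continuous f x -> continuous g x -> continuous (fun y => f y - g y) x.
Proof. intros. unfold Rminus. apply cont_plus; auto. apply cont_opp; auto. Qed.

Lemma cont_const {U : UniformSpace} (c : R) (x : U) : continuous (fun _ => c) x.
Proof. apply continuous_const. Qed.

Lemma cont_fst (x : R * R) : continuous (fun z : R * R => fst z) x.
Proof. destruct x. apply continuous_fst. Qed.

Lemma cont_snd (x : R * R) : continuous (fun z : R * R => snd z) x.
Proof. destruct x. apply continuous_snd. Qed.

Lemma cont_id (x : R) : continuous (fun z : R => z) x.
Proof. apply continuous_id. Qed.

Lemma is_derive_cont (f : R -> R) x l : is_derive f x l -> continuous f x.
Proof. intros H. apply (@ex_derive_continuous R_AbsRing R_NormedModule). exists l. exact H. Qed.

Lemma k2_bound h eps M a b : 0 < eps -> smooth_field (h eps) -> smooth_field (kernel h eps) ->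
  hyp_M h eps M -> kernel_sym (kernel h eps) -> -/2 <= b < /2 ->
  Rabs (vcomp 1 (kernel h eps (mk3 0 a b))) <= Rabs a * (4 * cc / sqrt (b ^ 2 + eps ^ 2) ^ 3 + M).
Proof.
  intros He HhS HkS HM Hsym Hb.
  set (p := mk3 0 0 b).
  set (phi := fun w => vcomp 1 (kernel h eps (vadd p (vscale w (ebasis 1))))).
  assert (Ea : phi a = vcomp 1 (kernel h eps (mk3 0 a b))).
  { unfold phi. f_equal. f_equal. unfold p. veq. }
  assert (E0 : phi 0 = 0).
  { unfold phi. replace (vadd p (vscale 0 (ebasis 1))) with p by (unfold p; veq).
    assert (Hs := Hsym 1%nat 1%nat p ltac:(lia) ltac:(lia)).
    replace (refl 1 p) with p in Hs by (unfold p; veq). cbn [Nat.eqb] in Hs. set (X := vcomp 1 (kernel h eps p)) in *. clearbody X. lra. }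
  assert (Hd : forall w, is_derive phi w (pd 1 (fun x => vcomp 1 (kernel h eps x)) (vadd p (vscale w (ebasis 1))))).
  { intros w. apply (pd_line (fun x => vcomp 1 (kernel h eps x))). apply sm_ex; auto. }
  destruct (MVT_gen phi 0 a (fun w => pd 1 (fun x => vcomp 1 (kernel h eps x)) (vadd p (vscale w (ebasis 1)))))
    as [c [_ Hc]].
  - intros; apply Hd.
  - intros. apply continuity_pt_filterlim. eapply is_derive_cont. apply Hd.
  - rewrite <- Ea. replace (phi a) with (phi a - phi 0) by lra. rewrite Hc.
    rewrite Rabs_mult, Rmult_comm. replace (a - 0) with a by ring.
    apply Rmult_le_compat_l; [apply Rabs_pos|].
    eapply Rle_trans. apply (pd_kernel_bound h eps M); auto.
    replace (red (cx3 (vadd p (vscale c (ebasis 1))))) with b. lra.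
    unfold p, vadd, vscale, ebasis, mk3, cx3; cbn [fst snd]. rewrite Rmult_0_r, Rplus_0_r.
    symmetry. apply red_id. exact Hb.
Qed.

Lemma f1_form h eps (alpha : R -> R) s r :
  cx1 (cross (kernel h eps (vsub (gam0 alpha s) (gam0 alpha r))) (dgam0 alpha r)) =
  vcomp 1 (kernel h eps (mk3 0 (alpha s - alpha r) (s - r)))
  - vcomp 2 (kernel h eps (mk3 0 (alpha s - alpha r) (s - r))) * Derive alpha r.
Proof.
  assert (E : vsub (gam0 alpha s) (gam0 alpha r) = mk3 0 (alpha s - alpha r) (s - r)) by veq.
  rewrite E. unfold cross, dgam0. cbn [cx1 cx2 cx3 mk3 fst snd vcomp]. ring.
Qed.

Lemma aux_bound1 u a eta M A q : 0 <= eta -> 0 <= M -> 0 < q -> u ^ 2 + A = q -> 0 <= A -> Rabs u < /2 ->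
  Rabs a <= eta * Rabs u ->
  Rabs a * (4 * cc / sqrt q ^ 3 + M) <= eta * (4 * cc / q + M).
Proof.
  intros He HM Hq Eq HA Hu Ha.
  assert (Hs : 0 < sqrt q) by (apply sqrt_lt_R0; lra).
  assert (Hsq : sqrt q ^ 2 = q) by (apply pow2_sqrt; lra).
  assert (Hus : Rabs u <= sqrt q) by (apply abs_le_of_sq; [lra|]; rewrite Hsq; nra).
  assert (Hc := cc_pos).
  assert (T : 0 <= 4 * cc / sqrt q ^ 3 + M).
  { assert (0 < 4 * cc / sqrt q ^ 3) by (apply Rdiv_lt_0_compat; [lra| apply pow_lt; lra]). lra. }
  eapply Rle_trans. apply Rmult_le_compat_r; [exact T| exact Ha].
  rewrite Rmult_assoc. apply Rmult_le_compat_l; [exact He|].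
  rewrite Rmult_plus_distr_l.
  assert (X1 : Rabs u * (4 * cc / sqrt q ^ 3) <= 4 * cc / q).
  { assert (E : sqrt q * (4 * cc / sqrt q ^ 3) = 4 * cc / sqrt q ^ 2) by (field; lra).
    rewrite Hsq in E. rewrite <- E.
    apply Rmult_le_compat_r; [left; apply Rdiv_lt_0_compat; [lra| apply pow_lt; lra]| exact Hus]. }
  assert (X2 : Rabs u * M <= M).
  { pose proof (Rabs_pos u). nra. }
  lra.
Qed.

Lemma first_bound h eps M (alpha : R -> R) d eta s : 0 < eps -> smooth_field (h eps) -> smooth_field (kernel h eps) ->
  hyp_M h eps M -> kernel_sym (kernel h eps) -> smooth1 alpha -> (forall r, alpha (r + 1) = alpha r + IZR d) ->
  (forall r, Rabs (Derive alpha r) <= eta) -> 0 <= eta -> 0 <= M ->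
  Rabs (RInt (fun r => cx1 (cross (kernel h eps (vsub (gam0 alpha s) (gam0 alpha r))) (dgam0 alpha r))) 0 1)
    <= (5 * cc * eta) * PI / eps + 2 * M * eta.
Proof.
  intros He HhS HkS HM Hsym Hs Hp Heta Heta0 HM0.
  apply (int_bound _ s eps (5 * cc * eta) (2 * M * eta)); auto.
  - pose proof cc_pos. nra.
  - intros x. eapply continuous_ext. intros r. symmetry. apply f1_form.
    apply cont_minus. apply (cont_mk3 (fun y => vcomp 1 (kernel h eps y))). apply sm_cont; auto. apply cont_const.
    apply cont_minus. apply cont_const. apply alpha_cont; auto.
    apply cont_minus. apply cont_const. apply cont_id.
    apply cont_mult. apply (cont_mk3 (fun y => vcomp 2 (kernel h eps y))). apply sm_cont; auto. apply cont_const.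
    apply cont_minus. apply cont_const. apply alpha_cont; auto.
    apply cont_minus. apply cont_const. apply cont_id.
    apply dalpha_cont; auto.
  - intros x. rewrite !f1_form. rewrite (dalpha_per alpha d x Hs Hp).
    rewrite (kernel_red h eps (mk3 0 (alpha s - alpha (x + 1)) (s - (x + 1))) (mk3 0 (alpha s - alpha x) (s - x))).
    reflexivity.
    all: cbn [cx1 cx2 cx3 mk3 fst snd]; try reflexivity.
    rewrite Hp. replace (alpha s - (alpha x + IZR d)) with ((alpha s - alpha x) - IZR d) by ring. apply red_mZ.
    replace (s - (x + 1)) with ((s - x) - 1) by ring. apply red_m1.
  - intros t Ht. rewrite f1_form.
    assert (Hu : -/2 <= s - t < /2) by lra.
    assert (Hu' : Rabs (s - t) < /2) by (apply Rabs_def1; lra).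
    set (q := (s - t) ^ 2 + eps ^ 2).
    assert (Hq : 0 < q) by (unfold q; assert (0 <= (s - t) ^ 2) by apply pow2_ge_0; assert (0 < eps ^ 2) by (apply pow_lt; lra); lra).
    assert (B1 : Rabs (vcomp 1 (kernel h eps (mk3 0 (alpha s - alpha t) (s - t)))) <= eta * (4 * cc / q + M)).
    { eapply Rle_trans. apply (k2_bound h eps M); auto.
      apply (aux_bound1 (s - t) _ eta M (eps ^ 2)); auto. pose proof (pow2_ge_0 eps). lra.
      apply alpha_lip; auto. }
    assert (B2 : Rabs (vcomp 2 (kernel h eps (mk3 0 (alpha s - alpha t) (s - t)))) <= cc / q + M).
    { eapply Rle_trans. apply (kernel_val_bound h eps M); auto.
      cbn [cx3 mk3 snd]. rewrite red_id by lra. fold q. lra. }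
    assert (B3 := Heta t).
    unfold Rminus at 1. eapply Rle_trans. apply Rabs_triang. rewrite Rabs_Ropp, Rabs_mult.
    assert (0 <= Rabs (vcomp 2 (kernel h eps (mk3 0 (alpha s - alpha t) (s - t))))) by apply Rabs_pos.
    assert (0 <= Rabs (Derive alpha t)) by apply Rabs_pos.
    assert (Rabs (vcomp 2 (kernel h eps (mk3 0 (alpha s - alpha t) (s - t)))) * Rabs (Derive alpha t)
            <= (cc / q + M) * eta) by (apply Rmult_le_compat; auto).
    fold q. replace (5 * cc * eta / q + 2 * M * eta) with
      (eta * (4 * cc / q + M) + (cc / q + M) * eta) by (field; lra).
    lra.
Qed.

Lemma cx1_vadd a b : cx1 (vadd a b) = cx1 a + cx1 b. Proof. reflexivity. Qed.
Lemma cx2_vadd a b : cx2 (vadd a b) = cx2 a + cx2 b. Proof. reflexivity. Qed.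
Lemma cx3_vadd a b : cx3 (vadd a b) = cx3 a + cx3 b. Proof. reflexivity. Qed.
Lemma cx1_vscale k a : cx1 (vscale k a) = k * cx1 a. Proof. reflexivity. Qed.
Lemma cx2_vscale k a : cx2 (vscale k a) = k * cx2 a. Proof. reflexivity. Qed.
Lemma cx3_vscale k a : cx3 (vscale k a) = k * cx3 a. Proof. reflexivity. Qed.

Lemma red_addZ a b n : a = b + IZR n -> forall c, red (a + c) = red (b + c).
Proof. intros E c. rewrite E. replace (b + IZR n + c) with ((b + c) + IZR n) by ring. apply red_IZR. Qed.

Lemma pd_kernel_per h eps i j y y' (n1 n2 n3 : Z) :
  cx1 y' = cx1 y + IZR n1 -> cx2 y' = cx2 y + IZR n2 -> cx3 y' = cx3 y + IZR n3 ->
  pd j (fun z => vcomp i (kernel h eps z)) y' = pd j (fun z => vcomp i (kernel h eps z)) y.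
Proof.
  intros H1 H2 H3. unfold pd. apply Derive_ext. intros t. f_equal. apply kernel_red;
  rewrite ?cx1_vadd, ?cx2_vadd, ?cx3_vadd, ?cx1_vscale, ?cx2_vscale, ?cx3_vscale;
  eapply red_addZ; eassumption.
Qed.

Lemma contP (F : V3 -> R) (x : V3) (alpha : R -> R) (u r0 : R) : (forall y, continuous F y) -> smooth1 alpha ->
  continuous (fun r => F (vsub (vadd x (vscale u (ebasis 2))) (gam0 alpha r))) r0.
Proof.
  intros HF Hs.
  apply (cont_mk3 F (fun r => cx1 x + u * 0 - 0) (fun r => cx2 x + u * 0 - alpha r) (fun r => cx3 x + u * 1 - r)).
  auto. apply cont_const. apply cont_minus. apply cont_const. apply alpha_cont; auto.
  apply cont_minus. apply cont_const. apply cont_id.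
Qed.

Lemma contG (F : V3 -> R) (x : V3) (alpha : R -> R) (r0 : R) : (forall y, continuous F y) -> smooth1 alpha ->
  continuous (fun r => F (vsub x (gam0 alpha r))) r0.
Proof.
  intros HF Hs.
  apply (cont_mk3 F (fun r => cx1 x - 0) (fun r => cx2 x - alpha r) (fun r => cx3 x - r)).
  auto. apply cont_const. apply cont_minus. apply cont_const. apply alpha_cont; auto.
  apply cont_minus. apply cont_const. apply cont_id.
Qed.

Lemma cont2P (F : V3 -> R) (x : V3) (alpha : R -> R) (z0 : R * R) : (forall y, continuous F y) -> smooth1 alpha ->
  continuous (fun z : R * R => F (vsub (vadd x (vscale (fst z) (ebasis 2))) (gam0 alpha (snd z)))) z0.
Proof.
  intros HF Hs.
  apply (cont_mk3 F (fun z : R * R => cx1 x + fst z * 0 - 0) (fun z => cx2 x + fst z * 0 - alpha (snd z))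
     (fun z => cx3 x + fst z * 1 - snd z)).
  auto.
  - apply cont_minus; [|apply cont_const]. apply cont_plus. apply cont_const. apply cont_mult. apply cont_fst. apply cont_const.
  - apply cont_minus. apply cont_plus. apply cont_const. apply cont_mult. apply cont_fst. apply cont_const.
    apply (continuous_comp (fun z : R * R => snd z) alpha). apply cont_snd. apply alpha_cont; auto.
  - apply cont_minus. apply cont_plus. apply cont_const. apply cont_mult. apply cont_fst. apply cont_const.
    apply cont_snd.
Qed.

Lemma cont2Q (F : V3 -> R) (x : V3) (alpha : R -> R) (z0 : R * R) : (forall y, continuous F y) -> smooth1 alpha ->
  continuous (fun z : R * R => F (vsub x (mk3 0 (alpha (snd z + fst z)) (snd z)))) z0.
Proof.
  intros HF Hs.
  apply (cont_mk3 F (fun z : R * R => cx1 x - 0) (fun z => cx2 x - alpha (snd z + fst z))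
     (fun z => cx3 x - snd z)).
  auto.
  - apply cont_const.
  - apply cont_minus. apply cont_const.
    apply (continuous_comp (fun z : R * R => snd z + fst z) alpha). apply cont_plus. apply cont_snd. apply cont_fst.
    apply alpha_cont; auto.
  - apply cont_minus. apply cont_const. apply cont_snd.
Qed.

Lemma cx1_vsub a b : cx1 (vsub a b) = cx1 a - cx1 b. Proof. reflexivity. Qed.
Lemma cx2_vsub a b : cx2 (vsub a b) = cx2 a - cx2 b. Proof. reflexivity. Qed.
Lemma cx3_vsub a b : cx3 (vsub a b) = cx3 a - cx3 b. Proof. reflexivity. Qed.

Lemma cube_bound eps q : 0 < eps -> eps ^ 2 <= q -> / sqrt q ^ 3 <= / eps / q.
Proof.
  intros He Hq. assert (Hq0 : 0 < q) by (assert (0 < eps ^ 2) by (apply pow_lt; lra); lra).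
  assert (Hs : 0 < sqrt q) by (apply sqrt_lt_R0; lra).
  assert (Hsq : sqrt q ^ 2 = q) by (apply pow2_sqrt; lra).
  assert (Hse : eps <= sqrt q).
  { rewrite <- (sqrt_pow2 eps) by lra. apply sqrt_le_1_alt. lra. }
  assert (E : sqrt q ^ 3 = sqrt q ^ 2 * sqrt q) by ring. rewrite Hsq in E. rewrite E.
  replace (/ eps / q) with (/ (q * eps)) by (field; lra).
  apply Rinv_le_contravar. apply Rmult_lt_0_compat; lra.
  apply Rmult_le_compat_l; lra.
Qed.

Lemma pd_int_bound h eps M (alpha : R -> R) d eta x' i j : 0 < eps -> smooth_field (h eps) ->
  smooth_field (kernel h eps) -> hyp_M h eps M -> smooth1 alpha ->
  (forall r, alpha (r + 1) = alpha r + IZR d) ->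
  (forall r, Rabs (Derive alpha r) <= eta) -> 0 <= eta -> 0 <= M -> (i < 3)%nat -> (j < 3)%nat ->
  Rabs (RInt (fun t => pd j (fun z => vcomp i (kernel h eps z)) (vsub x' (gam0 alpha t)) * Derive alpha t) 0 1)
    <= eta * 4 * cc / eps * PI / eps + M * eta.
Proof.
  intros He HhS HkS HM Hs Hp Heta Heta0 HM0 Hi Hj.
  pose proof cc_pos.
  apply (int_bound _ (cx3 x') eps (eta * 4 * cc / eps) (M * eta)); auto.
  - apply Rdiv_le_0_compat; [nra| lra].
  - intros r. apply cont_mult. apply contG; auto. apply sm_pdcont; auto. apply dalpha_cont; auto.
  - intros t. rewrite (dalpha_per alpha d t Hs Hp). f_equal.
    apply (pd_kernel_per h eps i j _ _ 0 (- d) (-1)).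
    + rewrite !cx1_vsub. unfold gam0, mk3, cx1; cbn [fst snd]. simpl IZR. ring.
    + rewrite !cx2_vsub. unfold gam0, mk3, cx2 at 2 4; cbn [fst snd]. rewrite Hp, opp_IZR. ring.
    + rewrite !cx3_vsub. unfold gam0, mk3, cx3 at 2 4; cbn [fst snd]. simpl IZR. ring.
  - intros t Ht. rewrite Rabs_mult.
    set (q := (cx3 x' - t) ^ 2 + eps ^ 2).
    assert (Hq : eps ^ 2 <= q) by (unfold q; assert (0 <= (cx3 x' - t) ^ 2) by apply pow2_ge_0; lra).
    assert (B1 : Rabs (pd j (fun z => vcomp i (kernel h eps z)) (vsub x' (gam0 alpha t))) <= 4 * cc / eps / q + M).
    { eapply Rle_trans. apply (pd_kernel_bound h eps M); auto.
      replace (red (cx3 (vsub x' (gam0 alpha t)))) with (cx3 x' - t).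
      2: { rewrite cx3_vsub. change (cx3 (gam0 alpha t)) with t. symmetry. apply red_id. lra. }
      fold q. pose proof (cube_bound eps q He Hq).
      assert (4 * cc / sqrt q ^ 3 <= 4 * cc / eps / q).
      { unfold Rdiv. rewrite !Rmult_assoc. apply Rmult_le_compat_l; [lra|]. apply Rmult_le_compat_l; [lra|]. exact H0. }
      lra. }
    assert (0 <= Rabs (pd j (fun z => vcomp i (kernel h eps z)) (vsub x' (gam0 alpha t)))) by apply Rabs_pos.
    assert (0 <= Rabs (Derive alpha t)) by apply Rabs_pos.
    assert (Rabs (pd j (fun z => vcomp i (kernel h eps z)) (vsub x' (gam0 alpha t))) * Rabs (Derive alpha t)
            <= (4 * cc / eps / q + M) * eta) by (apply Rmult_le_compat; auto).
    fold q. replace (eta * 4 * cc / eps / q + M * eta) with ((4 * cc / eps / q + M) * eta)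
      by (field; assert (0 < eps ^ 2) by (apply pow_lt; lra); split; lra).
    lra.
Qed.

Lemma is_derive_mulr (f : R -> R) x l k : is_derive f x l -> is_derive (fun y => f y * k) x (l * k).
Proof.
  intros H. eapply is_derive_ext. intros; apply Rmult_comm.
  rewrite Rmult_comm. apply is_derive_scal. exact H.
Qed.

Lemma Pline x (alpha : R -> R) v z :
  vadd (vsub (vadd x (vscale 0 (ebasis 2))) (gam0 alpha v)) (vscale z (ebasis 2)) =
  vsub (vadd x (vscale z (ebasis 2))) (gam0 alpha v).
Proof. veq. Qed.

Lemma T2 h eps M (alpha : R -> R) d eta x i : 0 < eps -> smooth_field (h eps) ->
  smooth_field (kernel h eps) -> hyp_M h eps M -> smooth1 alpha ->
  (forall r, alpha (r + 1) = alpha r + IZR d) ->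
  (forall r, Rabs (Derive alpha r) <= eta) -> 0 <= eta -> 0 <= M -> (i < 3)%nat ->
  exists D, is_derive (fun u => RInt (fun r => vcomp i (kernel h eps
                 (vsub (vadd x (vscale u (ebasis 2))) (gam0 alpha r))) * Derive alpha r) 0 1) 0 D
            /\ Rabs D <= eta * 4 * cc / eps * PI / eps + M * eta.
Proof.
  intros He HhS HkS HM Hs Hp Heta Heta0 HM0 Hi.
  set (kc := fun z => vcomp i (kernel h eps z)).
  set (P := fun u r => vsub (vadd x (vscale u (ebasis 2))) (gam0 alpha r)).
  set (f := fun u r => kc (P u r) * Derive alpha r).
  assert (Hpt : forall u v, is_derive (fun z => f z v) u (pd 2 kc (P u v) * Derive alpha v)).
  { intros u v. unfold f. apply is_derive_mulr.
    eapply is_derive_ext. intros z. unfold P. rewrite <- (Pline x alpha v z). reflexivity.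
    unfold P. rewrite <- (Pline x alpha v u). apply pd_line. apply sm_ex; auto. }
  exists (RInt (fun t => pd 2 kc (P 0 t) * Derive alpha t) 0 1). split.
  - replace (RInt (fun t => pd 2 kc (P 0 t) * Derive alpha t) 0 1)
      with (RInt (fun t => Derive (fun u => f u t) 0) 0 1).
    2: { apply RInt_ext. intros t _. apply is_derive_unique. apply Hpt. }
    assert (H1 : locally 0 (fun y => forall t, Rmin 0 1 <= t <= Rmax 0 1 -> ex_derive (fun u => f u t) y)).
    { apply filter_forall. intros y t _. eexists. apply Hpt. }
    assert (H2 : forall t, Rmin 0 1 <= t <= Rmax 0 1 -> continuity_2d_pt (fun u v => Derive (fun z => f z v) u) 0 t).
    { intros t _.
      assert (C : continuous (fun z : R * R => pd 2 kc (P (fst z) (snd z)) * Derive alpha (snd z)) (0, t)).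
      { apply (cont_mult (fun z : R * R => pd 2 kc (P (fst z) (snd z))) (fun z => Derive alpha (snd z))).
        unfold P. apply (cont2P (pd 2 kc)); auto. intros; apply sm_pdcont; auto.
        apply (continuous_comp (fun z : R * R => snd z) (Derive alpha)). apply cont_snd. apply dalpha_cont; auto. }
      apply (continuity_2d_pt_ext (fun u v => pd 2 kc (P u v) * Derive alpha v)).
      { intros u v. symmetry. apply is_derive_unique. apply Hpt. }
      apply continuity_2d_pt_filterlim. exact C. }
    assert (H3 : locally 0 (fun y => ex_RInt (fun t => f y t) 0 1)).
    { apply filter_forall. intros y. apply (@ex_RInt_continuous R_CompleteNormedModule). intros z _.
      apply (cont_mult (fun t => kc (P y t)) (fun t => Derive alpha t)).
      unfold P. apply (contP kc); auto. intros; apply sm_cont; auto.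
      apply dalpha_cont; auto. }
    pose proof (is_derive_RInt_param f 0 1 0 H1 H2 H3) as HD.
    change (is_derive (fun u => RInt (fun t => f u t) 0 1) 0 (RInt (fun t => Derive (fun u => f u t) 0) 0 1)).
    exact HD.
  - unfold P, kc. apply (pd_int_bound h eps M alpha d eta); auto.
Qed.

Lemma T1 h eps M (alpha : R -> R) d eta x i : 0 < eps -> smooth_field (h eps) ->
  smooth_field (kernel h eps) -> hyp_M h eps M -> smooth1 alpha ->
  (forall r, alpha (r + 1) = alpha r + IZR d) ->
  (forall r, Rabs (Derive alpha r) <= eta) -> 0 <= eta -> 0 <= M -> (i < 3)%nat ->
  exists D, is_derive (fun u => RInt (fun r => vcomp i (kernel h eps
                 (vsub (vadd x (vscale u (ebasis 2))) (gam0 alpha r)))) 0 1) 0 D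
            /\ Rabs D <= eta * 4 * cc / eps * PI / eps + M * eta.
Proof.
  intros He HhS HkS HM Hs Hp Heta Heta0 HM0 Hi.
  set (kc := fun z => vcomp i (kernel h eps z)).
  set (P := fun u r => vsub (vadd x (vscale u (ebasis 2))) (gam0 alpha r)).
  set (Q := fun u r => vsub x (mk3 0 (alpha (r + u)) r)).
  assert (Hkc : forall y, continuous kc y) by (intros; apply sm_cont; auto).
  assert (Hid : forall u, RInt (fun r => kc (P u r)) 0 1 = RInt (fun r => kc (Q u r)) 0 1).
  { intros u.
    rewrite <- (RInt_periodic (fun r => kc (P u r)) u).
    2: { intros r. unfold P. apply (contP kc); auto. }
    2: { intros r. unfold kc, P. f_equal. apply kernel_red.
         - rewrite !cx1_vsub. reflexivity.
         - rewrite !cx2_vsub. set (A := cx2 (vadd x (vscale u (ebasis 2)))).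
           change (cx2 (gam0 alpha (r + 1))) with (alpha (r + 1)).
           change (cx2 (gam0 alpha r)) with (alpha r). rewrite Hp.
           replace (A - (alpha r + IZR d)) with ((A - alpha r) - IZR d) by ring. apply red_mZ.
         - rewrite !cx3_vsub. set (A := cx3 (vadd x (vscale u (ebasis 2)))).
           change (cx3 (gam0 alpha (r + 1))) with (r + 1).
           change (cx3 (gam0 alpha r)) with r.
           replace (A - (r + 1)) with ((A - r) - 1) by ring. apply red_m1. }
    assert (Ex : ex_RInt (fun r => kc (P u r)) (1 * 0 + u) (1 * 1 + u)).
    { apply (@ex_RInt_continuous R_CompleteNormedModule). intros; unfold P; apply (contP kc); auto. }
    assert (L := RInt_comp_lin (fun r => kc (P u r)) 1 u 0 1 Ex).
    replace (1 * 0 + u) with u in L by ring. replace (1 * 1 + u) with (u + 1) in L by ring.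
    rewrite <- L.
    apply RInt_ext. intros y _. cbv beta.
    replace (1 * y + u) with (y + u) by ring.
    transitivity (kc (P u (y + u))). exact (scal_one _).
    replace (P u (y + u)) with (Q u y); [reflexivity|]. unfold P, Q. veq. }
  assert (Hpt : forall u v, is_derive (fun z => kc (Q z v)) u (- Derive alpha (v + u) * pd 1 kc (Q u v))).
  { intros u v.
    set (p := vsub x (mk3 0 0 v)).
    assert (EQ : forall z, Q z v = vadd p (vscale (- alpha (v + z)) (ebasis 1))).
    { intros z. unfold Q, p. replace (v + z) with (z + v) by ring. veq. }
    assert (dg : is_derive (fun z => - alpha (v + z)) u (- Derive alpha (v + u))).
    { assert (dg0 : is_derive (fun z => alpha (v + z)) u (scal 1 (Derive alpha (v + u)))).
      { apply (is_derive_comp alpha (fun z => v + z)). apply alpha_der; auto. auto_derive; auto; ring. }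
      apply (is_derive_opp (fun z => alpha (v + z))) in dg0.
      replace (- Derive alpha (v + u)) with (opp (scal 1 (Derive alpha (v + u)))).
      exact dg0. unfold opp, scal; simpl; unfold mult; simpl; ring. }
    assert (df := pd_line kc 1 (sm_ex _ i 1 HkS Hi ltac:(lia)) p (- alpha (v + u))).
    assert (H := is_derive_comp (fun w => kc (vadd p (vscale w (ebasis 1)))) (fun z => - alpha (v + z)) u _ _ df dg).
    rewrite EQ. eapply is_derive_ext; [|exact H]. intros z. cbv beta. rewrite EQ. reflexivity. }
  exists (- RInt (fun t => pd 1 kc (vsub x (gam0 alpha t)) * Derive alpha t) 0 1).
  split.
  - apply (is_derive_ext (fun u => RInt (fun r => kc (Q u r)) 0 1)).
    { intros u. symmetry. apply Hid. }
    set (g := fun u r => kc (Q u r)).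
    assert (H1 : locally 0 (fun y => forall t, Rmin 0 1 <= t <= Rmax 0 1 -> ex_derive (fun u => g u t) y)).
    { apply filter_forall. intros y t _. eexists. apply Hpt. }
    assert (H2 : forall t, Rmin 0 1 <= t <= Rmax 0 1 -> continuity_2d_pt (fun u v => Derive (fun z => g z v) u) 0 t).
    { intros t _.
      assert (C : continuous (fun z : R * R => - Derive alpha (snd z + fst z) * pd 1 kc (Q (fst z) (snd z))) (0, t)).
      { apply (cont_mult (fun z : R * R => - Derive alpha (snd z + fst z)) (fun z => pd 1 kc (Q (fst z) (snd z)))).
        apply (cont_opp (fun z : R * R => Derive alpha (snd z + fst z))).
        apply (continuous_comp (fun z : R * R => snd z + fst z) (Derive alpha)).
        apply cont_plus. apply cont_snd. apply cont_fst. apply dalpha_cont; auto.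
        unfold Q. apply (cont2Q (pd 1 kc)); auto. intros; apply sm_pdcont; auto. }
      apply (continuity_2d_pt_ext (fun u v => - Derive alpha (v + u) * pd 1 kc (Q u v))).
      { intros u v. symmetry. apply is_derive_unique. apply Hpt. }
      apply continuity_2d_pt_filterlim. exact C. }
    assert (H3 : locally 0 (fun y => ex_RInt (fun t => g y t) 0 1)).
    { apply filter_forall. intros y. apply (@ex_RInt_continuous R_CompleteNormedModule). intros z _.
      apply (cont_mk3 kc (fun r => cx1 x - 0) (fun r => cx2 x - alpha (r + y)) (fun r => cx3 x - r)).
      auto. apply cont_const. apply cont_minus. apply cont_const.
      apply (continuous_comp (fun r => r + y) alpha). apply cont_plus. apply cont_id. apply cont_const.
      apply alpha_cont; auto.
      apply cont_minus. apply cont_const. apply cont_id. }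
    pose proof (is_derive_RInt_param g 0 1 0 H1 H2 H3) as HD.
    replace (- RInt (fun t => pd 1 kc (vsub x (gam0 alpha t)) * Derive alpha t) 0 1)
      with (RInt (fun t => Derive (fun u => g u t) 0) 0 1).
    exact HD.
    transitivity (RInt (fun t => opp (pd 1 kc (vsub x (gam0 alpha t)) * Derive alpha t)) 0 1).
    { apply RInt_ext. intros t _. unfold g. transitivity (- Derive alpha (t + 0) * pd 1 kc (Q 0 t)). apply is_derive_unique, Hpt.
      unfold Q. rewrite Rplus_0_r. change (mk3 0 (alpha t) t) with (gam0 alpha t).
      unfold opp; simpl. ring. }
    assert (Ex : ex_RInt (fun t => pd 1 kc (vsub x (gam0 alpha t)) * Derive alpha t) 0 1).
    { apply (@ex_RInt_continuous R_CompleteNormedModule). intros z _.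
      apply cont_mult. apply (contG (pd 1 kc)); auto. intros; apply sm_pdcont; auto. apply dalpha_cont; auto. }
    exact (RInt_opp (fun t => pd 1 kc (vsub x (gam0 alpha t)) * Derive alpha t) 0 1 Ex).
  - rewrite Rabs_Ropp. unfold kc. apply (pd_int_bound h eps M alpha d eta); auto.
Qed.

Lemma norm3_le a b c : norm3 (mk3 a b c) <= Rabs a + Rabs b + Rabs c.
Proof.
  unfold norm3. cbn [cx1 cx2 cx3 mk3 fst snd].
  pose proof (Rabs_pos a). pose proof (Rabs_pos b). pose proof (Rabs_pos c).
  rewrite <- (sqrt_pow2 (Rabs a + Rabs b + Rabs c)) by lra.
  apply sqrt_le_1_alt.
  rewrite <- (pow2_abs a), <- (pow2_abs b), <- (pow2_abs c). nra.
Qed.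

Lemma hyp_M_abs h eps M : hyp_M h eps M -> hyp_M h eps (Rabs M).
Proof.
  intros H x i j Hx Hi Hj. destruct (H x i j Hx Hi Hj). pose proof (Rle_abs M). split; lra.
Qed.

Lemma cc_PI : cc * PI = /4.
Proof. unfold cc. field. apply PI_neq0. Qed.

Lemma comp_form h eps Gam (alpha : R -> R) x t :
  cx1 (v0 h eps Gam alpha (vadd x (vscale t (ebasis 2)))) =
    Gam * RInt (fun r => cx1 (cross (kernel h eps (vsub (vadd x (vscale t (ebasis 2))) (gam0 alpha r))) (dgam0 alpha r))) 0 1
  /\ cx2 (v0 h eps Gam alpha (vadd x (vscale t (ebasis 2)))) =
    Gam * RInt (fun r => cx2 (cross (kernel h eps (vsub (vadd x (vscale t (ebasis 2))) (gam0 alpha r))) (dgam0 alpha r))) 0 1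
  /\ cx3 (v0 h eps Gam alpha (vadd x (vscale t (ebasis 2)))) =
    Gam * RInt (fun r => cx3 (cross (kernel h eps (vsub (vadd x (vscale t (ebasis 2))) (gam0 alpha r))) (dgam0 alpha r))) 0 1.
Proof. repeat split; reflexivity. Qed.

Lemma second_bound h eps M (alpha : R -> R) d eta Gam x : 0 < eps -> smooth_field (h eps) ->
  smooth_field (kernel h eps) -> hyp_M h eps M -> smooth1 alpha ->
  (forall r, alpha (r + 1) = alpha r + IZR d) ->
  (forall r, Rabs (Derive alpha r) <= eta) -> 0 <= eta -> 0 <= M ->
  norm3 (pd_field 2 (v0 h eps Gam alpha) x) <= 4 * Rabs Gam * (eta * 4 * cc / eps * PI / eps + M * eta).
Proof.
  intros He HhS HkS HM Hs Hp Heta Heta0 HM0.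
  set (B := eta * 4 * cc / eps * PI / eps + M * eta).
  destruct (T1 h eps M alpha d eta x 1 He HhS HkS HM Hs Hp Heta Heta0 HM0 ltac:(lia)) as [D1 [HD1 B1]].
  destruct (T1 h eps M alpha d eta x 0 He HhS HkS HM Hs Hp Heta Heta0 HM0 ltac:(lia)) as [D1' [HD1' B1']].
  destruct (T2 h eps M alpha d eta x 2 He HhS HkS HM Hs Hp Heta Heta0 HM0 ltac:(lia)) as [D2 [HD2 B2]].
  destruct (T2 h eps M alpha d eta x 0 He HhS HkS HM Hs Hp Heta Heta0 HM0 ltac:(lia)) as [D2' [HD2' B2']].
  set (P := fun u r => vsub (vadd x (vscale u (ebasis 2))) (gam0 alpha r)).
  assert (Ex1 : forall i t, (i < 3)%nat -> ex_RInt (fun r => vcomp i (kernel h eps (P t r))) 0 1).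
  { intros i t Hi. apply (@ex_RInt_continuous R_CompleteNormedModule). intros z _. unfold P.
    apply (contP (fun y => vcomp i (kernel h eps y))); auto. intros; apply sm_cont; auto. }
  assert (Ex2 : forall i t, (i < 3)%nat -> ex_RInt (fun r => vcomp i (kernel h eps (P t r)) * Derive alpha r) 0 1).
  { intros i t Hi. apply (@ex_RInt_continuous R_CompleteNormedModule). intros z _. unfold P.
    apply cont_mult. apply (contP (fun y => vcomp i (kernel h eps y))); auto. intros; apply sm_cont; auto.
    apply dalpha_cont; auto. }
  assert (E1 : pd 2 (fun y => cx1 (v0 h eps Gam alpha y)) x = Gam * (D1 - D2)).
  { unfold pd. apply is_derive_unique.
    apply (is_derive_ext (fun t => Gam * (RInt (fun r => vcomp 1 (kernel h eps (P t r))) 0 1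
                                  - RInt (fun r => vcomp 2 (kernel h eps (P t r)) * Derive alpha r) 0 1))).
    { intros t. rewrite (proj1 (comp_form h eps Gam alpha x t)). f_equal.
      transitivity (minus (RInt (fun r => vcomp 1 (kernel h eps (P t r))) 0 1)
                          (RInt (fun r => vcomp 2 (kernel h eps (P t r)) * Derive alpha r) 0 1)).
      reflexivity.
      rewrite <- RInt_minus by auto. apply RInt_ext. intros r _. unfold P, cross, dgam0.
      cbn [cx1 cx2 cx3 mk3 fst snd vcomp]. unfold minus, plus, opp; simpl. ring. }
    apply is_derive_scal. apply (is_derive_minus _ _ 0 D1 D2); auto. }
  assert (E2 : pd 2 (fun y => cx2 (v0 h eps Gam alpha y)) x = Gam * (- D1')).
  { unfold pd. apply is_derive_unique.
    apply (is_derive_ext (fun t => Gam * (- RInt (fun r => vcomp 0 (kernel h eps (P t r))) 0 1))).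
    { intros t. rewrite (proj1 (proj2 (comp_form h eps Gam alpha x t))). f_equal.
      transitivity (opp (RInt (fun r => vcomp 0 (kernel h eps (P t r))) 0 1)). reflexivity.
      rewrite <- RInt_opp by auto. apply RInt_ext. intros r _. unfold P, cross, dgam0.
      cbn [cx1 cx2 cx3 mk3 fst snd vcomp]. unfold opp; simpl. ring. }
    apply is_derive_scal. apply (is_derive_opp _ 0 D1'); auto. }
  assert (E3 : pd 2 (fun y => cx3 (v0 h eps Gam alpha y)) x = Gam * D2').
  { unfold pd. apply is_derive_unique.
    apply (is_derive_ext (fun t => Gam * RInt (fun r => vcomp 0 (kernel h eps (P t r)) * Derive alpha r) 0 1)).
    { intros t. rewrite (proj2 (proj2 (comp_form h eps Gam alpha x t))). apply (f_equal (Rmult Gam)).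
      apply RInt_ext. intros r _. unfold P, cross, dgam0.
      cbn [cx1 cx2 cx3 mk3 fst snd vcomp]. rewrite Rmult_0_r, Rminus_0_r. reflexivity. }
    apply is_derive_scal. auto. }
  unfold pd_field. rewrite E1, E2, E3.
  eapply Rle_trans. apply norm3_le.
  rewrite !Rabs_mult, Rabs_Ropp.
  assert (Rabs (D1 - D2) <= B + B).
  { unfold B. unfold Rminus. eapply Rle_trans. apply Rabs_triang. rewrite Rabs_Ropp. lra. }
  pose proof (Rabs_pos Gam).
  assert (Rabs Gam * Rabs (D1 - D2) <= Rabs Gam * (B + B)) by (apply Rmult_le_compat_l; auto).
  assert (Rabs Gam * Rabs D1' <= Rabs Gam * B) by (apply Rmult_le_compat_l; auto).
  assert (Rabs Gam * Rabs D2' <= Rabs Gam * B) by (apply Rmult_le_compat_l; auto).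
  unfold B in *. lra.
Qed.

Theorem lemma3 :
  forall h : R -> V3 -> V3,
    (* h^eps is a smooth correction *)
    (forall eps, 0 < eps <= 1 -> smooth_field (h eps)) ->
    (* making k^eps a smooth periodic kernel *)
    (forall eps, 0 < eps <= 1 -> smooth_field (kernel h eps)) ->
    (* h^eps and grad h^eps bounded uniformly in eps *)
    (exists M : R, forall eps x i j, 0 < eps <= 1 -> in_cell x ->
        (i < 3)%nat -> (j < 3)%nat ->
        norm3 (h eps x) <= M /\ Rabs (pd j (fun y => vcomp i (h eps y)) x) <= M) ->
    (* parity of the components of k^eps *)
    (forall eps, 0 < eps <= 1 -> kernel_sym (kernel h eps)) ->
  exists C : R,
    forall (eps Gam : R) (alpha : R -> R),
      0 < eps <= 1 ->
      smooth1 alpha ->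
      (* alpha : T -> T *)
      (exists d : Z, forall r, alpha (r + 1) = alpha r + IZR d) ->
      Rbar_le (sup_abs (Derive alpha)) 1 ->
      let eta := real (sup_abs (Derive alpha)) in
      (forall r, Rabs (cx1 (v0 h eps Gam alpha (gam0 alpha r)))
                   <= C * Rabs Gam * eta / eps) /\
      (forall x, norm3 (pd_field 2 (v0 h eps Gam alpha) x)
                   <= C * Rabs Gam * eta / eps ^ 2).
Proof.
  intros h HhS HkS [M HM] Hsym.
  exists (6 + 6 * Rabs M).
  intros eps Gam alpha He Hs [d Hp] Hle eta.
  destruct (eta_facts alpha Hle) as [[Heta0 Heta1] Heta].
  fold eta in Heta0, Heta1, Heta.
  assert (HM' : hyp_M h eps (Rabs M)).
  { apply hyp_M_abs. intros x i j Hx Hi Hj. apply HM; auto. }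
  assert (HM0 : 0 <= Rabs M) by apply Rabs_pos.
  assert (He0 : 0 < eps) by lra.
  pose proof (Rabs_pos Gam) as HG.
  assert (Hk : 0 <= eta / eps) by (apply Rdiv_le_0_compat; lra).
  split.
  - intros r.
    change (cx1 (v0 h eps Gam alpha (gam0 alpha r))) with
      (Gam * RInt (fun r0 => cx1 (cross (kernel h eps (vsub (gam0 alpha r) (gam0 alpha r0))) (dgam0 alpha r0))) 0 1).
    rewrite Rabs_mult.
    assert (B := first_bound h eps (Rabs M) alpha d eta r He0 (HhS eps He) (HkS eps He) HM' (Hsym eps He)
                   Hs Hp Heta Heta0 HM0).
    replace (5 * cc * eta * PI / eps) with (5 / 4 * (eta / eps)) in B
      by (replace (5 * cc * eta * PI / eps) with (5 * (cc * PI) * eta / eps) by (field; lra);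
          rewrite cc_PI; field; lra).
    assert (X : 5 / 4 * (eta / eps) + 2 * Rabs M * eta <= (6 + 6 * Rabs M) * (eta / eps)).
    { assert (Ee : 2 * Rabs M * eta = 2 * (Rabs M * (eta / eps)) * eps) by (field; lra).
      rewrite Ee. assert (0 <= Rabs M * (eta / eps)) by (apply Rmult_le_pos; lra). nra. }
    replace ((6 + 6 * Rabs M) * Rabs Gam * eta / eps) with (Rabs Gam * ((6 + 6 * Rabs M) * (eta / eps)))
      by (field; lra).
    apply Rmult_le_compat_l; [exact HG|]. lra.
  - intros x.
    assert (B := second_bound h eps (Rabs M) alpha d eta Gam x He0 (HhS eps He) (HkS eps He) HM' Hs Hp Heta Heta0 HM0).
    assert (E : eta * 4 * cc / eps * PI / eps = eta / eps ^ 2).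
    { replace (eta * 4 * cc / eps * PI / eps) with (4 * (cc * PI) * eta / eps ^ 2) by (field; lra).
      rewrite cc_PI. field. lra. }
    rewrite E in B.
    assert (Hk2 : 0 <= eta / eps ^ 2) by (apply Rdiv_le_0_compat; [lra| apply pow_lt; lra]).
    assert (X : 4 * (eta / eps ^ 2 + Rabs M * eta) <= (6 + 6 * Rabs M) * (eta / eps ^ 2)).
    { assert (He2 : 0 < eps ^ 2 <= 1) by (split; [apply pow_lt; lra| nra]).
      assert (Ee : Rabs M * eta = (Rabs M * (eta / eps ^ 2)) * eps ^ 2) by (field; lra).
      rewrite Ee. assert (0 <= Rabs M * (eta / eps ^ 2)) by (apply Rmult_le_pos; lra). nra. }
    replace ((6 + 6 * Rabs M) * Rabs Gam * eta / eps ^ 2) with (Rabs Gam * ((6 + 6 * Rabs M) * (eta / eps ^ 2)))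
      by (field; lra).
    eapply Rle_trans. exact B.
    replace (4 * Rabs Gam * (eta / eps ^ 2 + Rabs M * eta)) with (Rabs Gam * (4 * (eta / eps ^ 2 + Rabs M * eta))) by ring.
    apply Rmult_le_compat_l; [exact HG|]. exact X.
Qed.
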